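(* Let $\mathbf G=(G,\tau)$ be a real linear algebraic group, write ${}^\gamma g=\tau(g)$, and let $\mathbf Y$ be a right homogeneous space of $\mathbf G$ with complex points $Y$ carrying a compatible complex conjugation $y\mapsto {}^\gamma y$ (i.e. ${}^\gamma(y\cdot g)={}^\gamma y\cdot{}^\gamma g$). Fix $y_0\in Y$, let $H=\mathrm{Stab}_G(y_0)$, and let $g_{y_0}\in G$ satisfy ${}^\gamma y_0=y_0\cdot g_{y_0}$. Let $z\in Hg_{y_0}$ satisfy $z\cdot{}^\gamma z=1$. Then $\varphi_z\colon g\mapsto z\,{}^\gamma g\,z^{-1}$ is an anti-regular involution of $G$ with $\varphi_z(H)=H$; put ${}_z\mathbf G=(G,\varphi_z)$ and ${}_z\mathbf H=(H,\varphi_z|_H)$. Consider the composite map $$H^1({}_z\mathbf H)\to H^1({}_z\mathbf G)\to H^1\mathbf G,\qquad [h]\mapsto[h]\mapsto[hz].$$ Then there exists $z'\in Hg_{y_0}\cap B^1\mathbf G$ if and only if the image of this composite map contains the neutral class $[1]\in H^1\mathbf G$.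
   Context: For a real group $(G,\tau)$: $Z^1=\{z\in G: z\tau(z)=1\}$, $B^1=\{g^{-1}\tau(g): g\in G\}$, $z\sim b^{-1}z\tau(b)$, $H^1=Z^1/\sim$ with neutral class $[1]$. Anti-regular maps: $\varphi$ such that $x\mapsto\overline{f(\varphi(x))}$ is regular for each regular function $f$. *)

(* Defs.v *)
(* linear algebraic groups as Zariski-closed subgroups of
   GL_n(C), C an algebraically closed field with conjugation
   (numClosedFieldType, e.g. the complex numbers). *)
From HB Require Import structures.
From mathcomp Require Import all_boot all_order all_algebra.
From mathcomp Require Import mpoly.
Set Implicit Arguments. Unset Strict Implicit. Unset Printing Implicit Defensive.
Import Order.TTheory GRing.Theory Num.Theory.
Local Open Scope ring_scope.

Section Defs.
Variables (C : numClosedFieldType) (n : nat).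
Notation M := 'M[C]_n.

Definition coords (g : M) : 'I_(n * n) -> C := fun i => mxvec g 0 i.

Definition lin_alg_group (G : M -> Prop) : Prop :=
  [/\ G 1%:M,
      (forall g h, G g -> G h -> G (g *m h)),
      (forall g, G g -> g \in unitmx),
      (forall g, G g -> G (invmx g)) &
      (forall x, x \in unitmx ->
         (forall p : {mpoly C[n * n]},
            (forall g, G g -> p.@[coords g] = 0) -> p.@[coords x] = 0) ->
         G x)].

(* regular functions on G: restrictions of elements of C[x_ij, 1/det] *)
Definition regular_on (G : M -> Prop) (f : M -> C) : Prop :=
  exists (p : {mpoly C[n * n]}) (k : nat),
    forall g, G g -> f g = p.@[coords g] / (\det g) ^+ k.

Definition anti_regular (G : M -> Prop) (phi : M -> M) : Prop :=
  (forall g, G g -> G (phi g)) /\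
  (forall f, regular_on G f -> regular_on G (fun x => (f (phi x))^*)).

Definition real_structure (G : M -> Prop) (tau : M -> M) : Prop :=
  [/\ anti_regular G tau,
      (forall g h, G g -> G h -> tau (g *m h) = tau g *m tau h) &
      (forall g, G g -> tau (tau g) = g)].

Definition Z1 (G : M -> Prop) (tau : M -> M) (z : M) : Prop :=
  G z /\ z *m tau z = 1%:M.

Definition B1 (G : M -> Prop) (tau : M -> M) (z : M) : Prop :=
  exists g, G g /\ z = invmx g *m tau g.

Definition cohomologous (G : M -> Prop) (tau : M -> M) (z w : M) : Prop :=
  exists b, G b /\ w = invmx b *m z *m tau b.

Definition H1class (G : M -> Prop) (tau : M -> M) (z : M) : M -> Prop :=
  fun w => Z1 G tau w /\ cohomologous G tau z w.

Definition twist (tau : M -> M) (z : M) : M -> M :=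
  fun g => z *m tau g *m invmx z.

End Defs.

(* Main.v *)
Require Import Defs.
From HB Require Import structures.
From mathcomp Require Import all_boot all_order all_algebra.
From mathcomp Require Import mpoly.
From Stdlib Require Import IndefiniteDescription FunctionalExtensionality.
Import Order.TTheory GRing.Theory Num.Theory.
Local Open Scope ring_scope.

Section Poly.
Variables (C : numClosedFieldType) (n : nat).
Notation M := 'M[C]_n.

Definition polyfun (h : M -> C) := exists q : {mpoly C[n * n]}, forall y, h y = q.@[coords y].

Lemma polyfun_const c : polyfun (fun _ => c).
Proof. by exists c%:MP => y; rewrite mevalC. Qed.

Lemma polyfun_add f g : polyfun f -> polyfun g -> polyfun (fun y => f y + g y).
Proof. by move=> [p Hp] [q Hq]; exists (p + q) => y; rewrite mevalD Hp Hq. Qed.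

Lemma polyfun_mul f g : polyfun f -> polyfun g -> polyfun (fun y => f y * g y).
Proof. by move=> [p Hp] [q Hq]; exists (p * q) => y; rewrite mevalM Hp Hq. Qed.

Lemma polyfun_sum (I : finType) (F : I -> M -> C) :
  (forall i, polyfun (F i)) -> polyfun (fun y => \sum_i F i y).
Proof.
move=> HF.
have: forall (r : seq I), polyfun (fun y => \sum_(i <- r) F i y).
  elim=> [|a r IH]; first by exists 0 => y; rewrite big_nil meval0.
  have -> : (fun y => \sum_(i <- a :: r) F i y) = (fun y => F a y + \sum_(i <- r) F i y).
    by apply: functional_extensionality => y; rewrite big_cons.
  exact: polyfun_add.
by move/(_ (index_enum I)).
Qed.

Lemma polyfun_entry i j : polyfun (fun y : M => y i j).
Proof. by exists 'X_(mxvec_index i j) => y; rewrite mevalXU /coords mxvecE. Qed.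

Lemma polyfun_coords_conj (z w : M) k : polyfun (fun y => coords (z *m y *m w) k).
Proof.
rewrite /coords; case/mxvec_indexP: k => i j.
under [X in polyfun X]functional_extensionality => y do rewrite mxvecE mxE.
apply: polyfun_sum => l; apply: polyfun_mul; last exact: polyfun_const.
under [X in polyfun X]functional_extensionality => y do rewrite mxE.
apply: polyfun_sum => k; apply: polyfun_mul; first exact: polyfun_const.
exact: polyfun_entry.
Qed.

Lemma polyfun_comp (F : M -> M) (p : {mpoly C[n * n]}) :
  (forall k, polyfun (fun y => coords (F y) k)) ->
  polyfun (fun y => p.@[coords (F y)]).
Proof.
move=> HF.
have [q Hq] := functional_choice _ HF.
exists (comp_mpoly [tuple q i | i < n * n] p) => y.
rewrite comp_mpoly_meval; apply: meval_eq => i.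
by rewrite tnth_mktuple Hq.
Qed.

End Poly.

Lemma regular_conj (C : numClosedFieldType) (n : nat) (G : 'M[C]_n -> Prop) (z : 'M[C]_n) f :
  z \in unitmx -> (forall y, G y -> G (z *m y *m invmx z)) ->
  regular_on G f -> regular_on G (fun y => f (z *m y *m invmx z)).
Proof.
move=> zU HG [p [k Hp]].
have [q Hq] := @polyfun_comp C n (fun y => z *m y *m invmx z) p (@polyfun_coords_conj C n z (invmx z)).
exists q, k => y Gy.
rewrite Hp; last exact: HG.
rewrite Hq !det_mulmx det_inv mulrAC mulrV ?mul1r // -unitmxE.
Qed.

Lemma invmx_uniq (C : numClosedFieldType) (n : nat) (A B : 'M[C]_n) :
  A \in unitmx -> A *m B = 1%:M -> B = invmx A.
Proof.
move=> AU AB; rewrite -[B]mul1mx -(mulVmx AU) -mulmxA AB mulmx1 //.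
Qed.

Theorem proposition3p2 (C : numClosedFieldType) (n : nat)
  (G : 'M[C]_n -> Prop) (tau : 'M[C]_n -> 'M[C]_n)
  (Y : Type) (act : Y -> 'M[C]_n -> Y) (cY : Y -> Y)
  (y0 : Y) (gy0 z : 'M[C]_n) :
  lin_alg_group G ->
  real_structure G tau ->
  (* Y is a right homogeneous space of G *)
  (forall y, act y 1%:M = y) ->
  (forall y g h, G g -> G h -> act y (g *m h) = act (act y g) h) ->
  (forall y y', exists g, G g /\ act y g = y') ->
  (* compatible complex conjugation on Y *)
  (forall y, cY (cY y) = y) ->
  (forall y g, G g -> cY (act y g) = act (cY y) (tau g)) ->
  G gy0 -> cY y0 = act y0 gy0 ->
  let H := fun g => G g /\ act y0 g = y0 in
  let HgY := fun x => exists h, H h /\ x = h *m gy0 in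
  HgY z -> z *m tau z = 1%:M ->
  let phi := twist tau z in
  [/\ real_structure G phi,
      (forall g, G g -> (H (phi g) <-> H g)) &
      ((exists z', HgY z' /\ B1 G tau z') <->
       (exists h, Z1 H phi h /\ H1class G tau (h *m z) 1%:M))].
Proof.
move=> [G1 GM Gunit Ginv _] [[Gtau regtau] taum tauinv] act1 actM _ cYinv cYact
  Ggy0 cy0 H HgY [h0 [[Gh0 ah0] Ez]] zz phi.
have Gz : G z by rewrite Ez; apply: (GM).
have zU : z \in unitmx by apply: (Gunit).
have Gzi : G (invmx z) by apply: (Ginv).
have tau1 : tau 1%:M = 1%:M.
  have U1 : tau 1%:M \in unitmx by apply/Gunit/Gtau.
  have E : tau 1%:M *m tau 1%:M = tau 1%:M by rewrite -taum // mul1mx.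
  by rewrite -[RHS](mulVmx U1) -{3}E mulmxA mulVmx // mul1mx.
have tauV : forall g, G g -> tau (invmx g) = invmx (tau g).
  move=> g Gg; apply: invmx_uniq; first by apply/Gunit/Gtau.
  by rewrite -taum ?mulmxV ?tau1 //; [apply: (Gunit) | apply: (Ginv)].
have tauz : tau z = invmx z by apply: invmx_uniq.
have tauzi : tau (invmx z) = z by rewrite tauV // tauz invmxK.
have ayz : act y0 z = cY y0 by rewrite Ez actM // ah0.
have key1 : forall w, act (act w (invmx z)) z = w.
  by move=> w; rewrite -actM // mulVmx // act1.
have key2 : forall w, act (act w z) (invmx z) = w.
  by move=> w; rewrite -actM // mulmxV // act1.
have Gphi : forall g, G g -> G (phi g).
  by move=> g Gg; rewrite /phi /twist; apply: (GM) => //; apply: (GM) => //; apply: (Gtau).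
have actphi : forall g, G g -> act y0 (phi g) = act (cY (act y0 g)) (invmx z).
  move=> g Gg; rewrite /phi /twist actM //; last by apply: (GM) => //; apply: (Gtau).
  by rewrite actM //; [rewrite ayz cYact | apply: (Gtau)].
split.
- split.
  + split => // f Hf.
    apply: (regtau (fun y => f (z *m y *m invmx z))).
    apply: regular_conj => // y Gy; apply: (GM) => //; by apply: (GM).
  + move=> g h Gg Gh; rewrite /phi /twist taum //.
    by rewrite -!mulmxA (mulmxA (invmx z)) mulVmx // mul1mx.
  + move=> g Gg; rewrite /phi /twist.
    have Gt : G (tau g) by apply: (Gtau).
    rewrite taum //; last by apply: (GM).
    rewrite taum // tauinv // tauz tauzi.
    by rewrite !mulmxA mulmxV // mul1mx -mulmxA mulmxV // mulmx1.
- move=> g Gg; rewrite /H; split.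
  + move=> [_ a]; split => //.
    have : cY (act y0 g) = cY y0 by rewrite -ayz -{2}a actphi // key1.
    by move=> /(congr1 cY); rewrite !cYinv.
  + move=> [_ a]; split; first exact: Gphi.
    by rewrite actphi // a -ayz key2.
- split.
  + move=> [z' [[h' [[Gh' ah'] Ez']] [g [Gg Eg]]]].
    have Gz' : G z' by rewrite Ez'; apply: (GM).
    have Gt : G (tau g) by apply: (Gtau).
    have tU : tau g \in unitmx by apply: (Gunit).
    have gU : g \in unitmx by apply: (Gunit).
    have tz' : tau z' = invmx (tau g) *m g.
      by rewrite Eg taum ?tauV ?tauinv //; apply: (Ginv).
    exists (z' *m invmx z); split; first split.
    * split; first by apply: (GM).
      by rewrite actM // Ez' actM // ah' -cy0 -ayz key2.
    * rewrite /phi /twist taum // tauzi.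
      rewrite -!mulmxA mulmxV // mulmx1 (mulmxA (invmx z)) mulVmx // mul1mx.
      rewrite tz' Eg -mulmxA (mulmxA (tau g)) mulmxV // mul1mx mulVmx //.
    * split; first by split => //; rewrite tau1 mul1mx.
      exists (invmx g); split; first by apply: (Ginv).
      rewrite invmxK tauV // -(mulmxA z') mulVmx // mulmx1 Eg.
      by rewrite mulmxA mulmxV // mul1mx mulmxV.
  + move=> [h [[[Gh ah] hphi] [_ [b [Gb Eb]]]]].
    exists (h *m z); split.
    * exists (h *m h0); split; last by rewrite Ez mulmxA.
      by split; [apply: (GM) | rewrite actM // ah ah0].
    * have bU : b \in unitmx by apply: (Gunit).
      have tU : tau b \in unitmx by apply/Gunit/Gtau.
      exists (invmx b); split; first by apply: (Ginv).
      rewrite invmxK tauV //.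
      have : b *m 1%:M *m invmx (tau b) = h *m z.
        rewrite Eb !mulmxA mulmxV // mul1mx -mulmxA mulmxV // mulmx1 //.
      by rewrite mulmx1 => <-.
Qed.
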